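(* For every positive integer $L$, $$\{(\mathbf{X},\mathbf{Y}) \in \mathbb{S}^L_{+}\times\mathbb{S}^L : -\mathbf{X}\preceq\mathbf{Y}\preceq\mathbf{X}\} = \operatorname{cl}\{(\mathbf{X},\mathbf{Y})\in\mathbb{S}^L_{++}\times\mathbb{S}^L : \mathbf{X}-\mathbf{Y}\mathbf{X}^{-1}\mathbf{Y}\succ 0\}.$$
   Context: $\mathbb{S}^L$, $\mathbb{S}^L_+$, $\mathbb{S}^L_{++}$ denote the real symmetric, positive semidefinite and positive definite $L\times L$ matrices; $\preceq$ and $\succ$ refer to the Loewner order; $\operatorname{cl}$ denotes closure. *)

(* Defs.v *)
From HB Require Import structures.
From mathcomp Require Import all_boot all_order all_algebra.
From mathcomp Require Import all_classical all_reals all_analysis.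
Set Implicit Arguments. Unset Strict Implicit. Unset Printing Implicit Defensive.
Import Order.TTheory GRing.Theory Num.Theory.
Local Open Scope ring_scope.

Definition symmx (R : realType) (L : nat) (A : 'M[R]_L) : Prop := A^T = A.

Definition psdmx (R : realType) (L : nat) (A : 'M[R]_L) : Prop :=
  symmx A /\ forall v : 'cV[R]_L, 0 <= (v^T *m A *m v) 0 0.

Definition pdmx (R : realType) (L : nat) (A : 'M[R]_L) : Prop :=
  symmx A /\ forall v : 'cV[R]_L, v != 0 -> 0 < (v^T *m A *m v) 0 0.

Definition loewner_le (R : realType) (L : nat) (A B : 'M[R]_L) : Prop :=
  psdmx (B - A).

(* Main.v *)
Require Import Defs.
From HB Require Import structures.
From mathcomp Require Import all_boot all_order all_algebra.
From mathcomp Require Import all_classical all_reals all_analysis.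
From mathcomp Require Import ring lra.
Import Order.TTheory GRing.Theory Num.Theory.
Import numFieldTopology.Exports.
Local Open Scope classical_set_scope.
Local Open Scope ring_scope.
Set Implicit Arguments. Unset Strict Implicit. Unset Printing Implicit Defensive.

Section QF.
Variables (R : realType) (L : nat).
Implicit Types (M N : 'M[R]_L) (u w : 'cV[R]_L).

Definition qf M u w : R := (u^T *m M *m w) 0 0.

Lemma qfDM M N u w : qf (M + N) u w = qf M u w + qf N u w.
Proof. by rewrite /qf mulmxDr mulmxDl mxE. Qed.
Lemma qfNM M u w : qf (- M) u w = - qf M u w.
Proof. by rewrite /qf mulmxN mulNmx mxE. Qed.
Lemma qfBM M N u w : qf (M - N) u w = qf M u w - qf N u w.
Proof. by rewrite qfDM qfNM. Qed.
Lemma qfZM a M u w : qf (a *: M) u w = a * qf M u w.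
Proof. by rewrite /qf -scalemxAr -scalemxAl mxE. Qed.
Lemma qfDl M u1 u2 w : qf M (u1 + u2) w = qf M u1 w + qf M u2 w.
Proof. by rewrite /qf linearD /= !mulmxDl mxE. Qed.
Lemma qfNl M u w : qf M (- u) w = - qf M u w.
Proof. by rewrite /qf linearN /= !mulNmx mxE. Qed.
Lemma qfDr M u w1 w2 : qf M u (w1 + w2) = qf M u w1 + qf M u w2.
Proof. by rewrite /qf mulmxDr mxE. Qed.
Lemma qfNr M u w : qf M u (- w) = - qf M u w.
Proof. by rewrite /qf mulmxN mxE. Qed.
Lemma qfT M u w : qf M u w = qf M^T w u.
Proof.
rewrite /qf; transitivity ((u^T *m M *m w)^T 0 0); first by rewrite [RHS]mxE.
by rewrite !trmx_mul trmxK mulmxA.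
Qed.
Lemma qf_mulr M N u w : qf M u (N *m w) = qf (M *m N) u w.
Proof. by rewrite /qf !mulmxA. Qed.
Lemma qf0l M w : qf M 0 w = 0.
Proof. by rewrite /qf trmx0 !mul0mx mxE. Qed.

Lemma qf_sym M u w : M^T = M -> qf M u w = qf M w u.
Proof. by move=> sM; rewrite qfT sM. Qed.

Lemma qf1_gt0 u : u != 0 -> 0 < qf 1%:M u u.
Proof.
move=> nz; rewrite /qf mulmx1 mxE.
have [i ui] : exists i, u i 0 != 0.
  apply/existsP; apply: contraR nz; rewrite negb_exists => /forallP H.
  apply/eqP/matrixP => i j; rewrite mxE (ord1 j); exact/eqP/negbNE/H.
rewrite (bigD1 i) //= ltr_wpDr //.
  by apply: sumr_ge0 => j _; rewrite mxE -expr2 sqr_ge0.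
by rewrite mxE -expr2 exprn_even_gt0 //.
Qed.
End QF.

Section Alg.
Variables (R : realType) (L : nat).
Implicit Types (X Y M : 'M[R]_L) (u v w : 'cV[R]_L).

Lemma pd_psd M : pdmx M -> psdmx M.
Proof.
move=> [sM pM]; split => // v; have [->|nz] := eqVneq v 0.
  by have := qf0l M (0 : 'cV[R]_L); rewrite /qf => ->.
exact/ltW/pM.
Qed.

Lemma pd_unit M : pdmx M -> M \in unitmx.
Proof.
move=> [sM pM]; rewrite unitmxE unitfE; apply/negP => /det0P [v nz vM].
have nz' : v^T != 0 by rewrite trmx_eq0.
have := pM _ nz'; rewrite trmxK vM mul0mx mxE; by rewrite ltxx.
Qed.

Lemma qf_exp2 M u w : M^T = M ->
  qf M (u + w) (u + w) = qf M u u + 2 * qf M u w + qf M w w /\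
  qf M (u - w) (u - w) = qf M u u - 2 * qf M u w + qf M w w.
Proof.
move=> sM; rewrite !(qfDl, qfDr, qfNl, qfNr) (@qf_sym _ _ M w u sM); split; ring.
Qed.

Lemma dir1 X Y : pdmx X -> symmx Y -> pdmx (X - Y *m invmx X *m Y) ->
  forall v, 0 <= qf (Y + X) v v /\ 0 <= qf (X - Y) v v.
Proof.
move=> pX sY pS v.
have uX := pd_unit pX; have [sX _] := pX; have [_ psX] := pd_psd pX.
have [_ psS] := pd_psd pS.
set w := invmx X *m Y *m v.
have h1 : qf X v w = qf Y v v.
  by rewrite /w -mulmxA qf_mulr mulmxV // qf_mulr mul1mx.
have h3 : qf X w w = qf (Y *m invmx X *m Y) v v.
  have -> : qf X w w = qf Y w v.
    by rewrite {2}/w -mulmxA qf_mulr mulmxV // qf_mulr mul1mx.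
  by rewrite (@qf_sym _ _ Y _ _ sY) /w qf_mulr mulmxA.
have hS := psS v; rewrite -/(qf _ v v) qfBM in hS.
have [e1 e2] := qf_exp2 v w sX.
have p1 := psX (v + w); have p2 := psX (v - w).
rewrite -/(qf _ _ _) e1 in p1; rewrite -/(qf _ _ _) e2 in p2.
rewrite qfDM qfBM; split; lra.
Qed.
End Alg.

Section Alg2.
Variables (R : realType) (L : nat).
Implicit Types (X Y M : 'M[R]_L) (u v w : 'cV[R]_L).

Lemma vec_half v w : v = (2^-1 : R) *: ((v + w) + (v - w)).
Proof. by rewrite addrACA subrr addr0 -mulr2n -[v *+ 2]scaler_nat scalerA mulVf ?scale1r // pnatr_eq0. Qed.

Lemma qfS M u w : qf M u w = (u^T *m M *m w) 0 0. Proof. by []. Qed.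

Lemma dir2 X Y t : 0 < t -> symmx X -> symmx Y ->
  (forall v, 0 <= qf (Y + X) v v) -> (forall v, 0 <= qf (X - Y) v v) ->
  pdmx (X + t%:M) /\ pdmx (X + t%:M - Y *m invmx (X + t%:M) *m Y).
Proof.
move=> t0 sX sY pA pB.
set X' := X + t%:M.
have sX' : X'^T = X' by rewrite /X' linearD /= tr_scalar_mx sX.
have qt u : qf X' u u = qf X u u + t * qf 1%:M u u.
  by rewrite /X' qfDM -[t%:M]scalemx1 qfZM.
have pA' u : u != 0 -> 0 < qf (Y + X') u u.
  move=> nz; have := qf1_gt0 nz; have := pA u.
  rewrite [qf (Y + X') _ _]qfDM qt qfDM; nra.
have pB' u : u != 0 -> 0 < qf (X' - Y) u u.
  move=> nz; have := qf1_gt0 nz; have := pB u.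
  rewrite [qf (X' - Y) _ _]qfBM qt qfBM; nra.
have psA u : 0 <= qf (Y + X') u u.
  by have [->|nz] := eqVneq u 0; [rewrite qf0l | exact/ltW/pA'].
have psB u : 0 <= qf (X' - Y) u u.
  by have [->|nz] := eqVneq u 0; [rewrite qf0l | exact/ltW/pB'].
have pX : pdmx X'.
  split => // v nz; rewrite -qfS.
  have := pA' v nz; have := pB' v nz; rewrite qfBM qfDM; lra.
have uX := pd_unit pX.
split => //; split.
  rewrite /symmx linearB /= !trmx_mul trmx_inv sX' sY mulmxA //.
move=> v nz; rewrite -qfS.
set w := invmx X' *m Y *m v.
have h1 : qf X' v w = qf Y v v.
  by rewrite /w -mulmxA qf_mulr mulmxV // qf_mulr mul1mx.
have h3 : qf X' w w = qf Y v w.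
  have -> : qf X' w w = qf Y w v.
    by rewrite {2}/w -mulmxA qf_mulr mulmxV // qf_mulr mul1mx.
  by rewrite (@qf_sym _ _ Y _ _ sY).
have h4 : qf (Y *m invmx X' *m Y) v v = qf Y v w.
  by rewrite /w qf_mulr mulmxA.
rewrite qfBM h4.
have [e1 e2] := qf_exp2 v w sX'; have [f1 f2] := qf_exp2 v w sY.
have a1 := psA (v - w); have a2 := psB (v + w).
rewrite qfDM e2 f2 in a1; rewrite qfBM e1 f1 in a2.
have [e0|ne] := eqVneq (v - w) 0; last first.
  have := pA' _ ne; rewrite qfDM e2 f2; lra.
have nz2 : v + w != 0.
  apply: contraNneq nz => vw.
  have -> : v = (2^-1 : R) *: ((v + w) + (v - w)).
    exact: vec_half.
  by rewrite vw e0 addr0 scaler0.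
have := pB' _ nz2; rewrite qfBM e1 f1; lra.
Qed.
End Alg2.
Section Topo.
Variables (R : realType) (L : nat).

Lemma fst_cont : continuous (fun p : 'M[R]_L * 'M[R]_L => p.1).
Proof. move=> p; exact: cvg_fst. Qed.
Lemma snd_cont : continuous (fun p : 'M[R]_L * 'M[R]_L => p.2).
Proof. move=> p; exact: cvg_snd. Qed.
Lemma cont_sum {T : topologicalType} (I : finType) (g : I -> T -> R) :
  (forall i, continuous (g i)) -> continuous (fun p => \sum_i g i p).
Proof.
move=> H.
suff : forall s : seq I, continuous (fun p => \sum_(i <- s) g i p) by apply.
elim => [|a s IH].
  under eq_fun do rewrite big_nil; exact: cst_continuous.
under eq_fun do rewrite big_cons.
move=> x; exact: (continuousD (H a x) (IH x)).
Qed.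

Lemma qf_sum (M : 'M[R]_L) v : qf M v v = \sum_i \sum_j v i 0 * M i j * v j 0.
Proof.
rewrite /qf mxE; under eq_bigr do rewrite mxE big_distrl /=.
rewrite exchange_big; apply: eq_bigr => i _; apply: eq_bigr => j _.
by rewrite !mxE.
Qed.

Lemma entry_cont {T : topologicalType} (g : T -> 'M[R]_L) i j :
  continuous g -> continuous (fun p => g p i j).
Proof.
move=> gc p; apply: (@continuous_comp _ _ _ g (fun M : 'M[R]_L => M i j)).
  exact: gc.
exact: coord_continuous.
Qed.

Lemma qf_cont {T : topologicalType} (g : T -> 'M[R]_L) v :
  continuous g -> continuous (fun p => qf (g p) v v).
Proof.
move=> gc; under eq_fun do rewrite qf_sum.
apply: cont_sum => i; apply: cont_sum => j.
move=> p.
apply: (@continuousM R T (fun p => v i 0 * g p i j) (fun=> v j 0)); last exact: cst_continuous.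
apply: (@continuousM R T (fun=> v i 0) (fun p => g p i j)); first exact: cst_continuous.
exact: entry_cont.
Qed.

Lemma clos_pre {T : topologicalType} (S : set T) (f : T -> R) (D : set R) :
  continuous f -> closed D -> S `<=` f @^-1` D -> forall p, closure S p -> D (f p).
Proof.
move=> fc cD SD p.
have cl : closed (f @^-1` D) by apply: preimage_closed => // x _; exact: fc.
move/(closure_subset SD); by rewrite -(proj1 (closure_id _) cl).
Qed.
End Topo.

Theorem lemma2 (R : realType) (L : nat) (hL : (0 < L)%N) :
  [set p : 'M[R]_L * 'M[R]_L |
     psdmx p.1 /\ symmx p.2 /\ loewner_le (- p.1) p.2 /\ loewner_le p.2 p.1]
  = closure [set p : 'M[R]_L * 'M[R]_L |
     pdmx p.1 /\ symmx p.2 /\ pdmx (p.1 - p.2 *m invmx p.1 *m p.2)].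
Proof.
apply/seteqP; split.
- move=> [X Y] /= [[sX psX] [sY [[_ pA] [_ pB]]]].
  move=> B nB.
  have [[B1 B2] [nB1 nB2] sB] := nB.
  rewrite /= in nB1 nB2 sB.
  pose h := fun t : R => X + t *: (1%:M : 'M[R]_L).
  have hc : {for 0, continuous h}.
    apply: (@continuousD R _ _ (fun=> X) (fun t : R => t *: (1%:M : 'M[R]_L))).
      exact: cst_continuous.
    by apply: continuousZr_tmp.
  have h0 : h 0 = X by rewrite /h scale0r addr0.
  rewrite -h0 in nB1.
  have /nbhs_ballP [e e0 eB] := hc _ nB1.
  have t0 : 0 < e / 2 by rewrite divr_gt0.
  have tB : B1 (h (e / 2)).
    apply: eB; rewrite /ball /= sub0r normrN gtr0_norm //.
    by rewrite ltr_pdivrMr // ltr_pMr // ltr1n.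
  have pAv v : 0 <= qf (Y + X) v v by have := pA v; rewrite opprK.
  have [pd1 pd2] := dir2 t0 sX sY pAv pB.
  exists (h (e / 2), Y); split; last by apply: sB; split => //; exact: nbhs_singleton.
  by rewrite /= /h scalemx1; split => //.
- set S := [set p | _ /\ _ /\ _].
  have SX : S `<=` [set p | pdmx p.1 /\ symmx p.2 /\ forall v,
     0 <= qf p.1 v v /\ 0 <= qf (p.2 + p.1) v v /\ 0 <= qf (p.1 - p.2) v v].
    move=> [X Y] /= [pX [sY pS]]; split => //; split => // v.
    have [_ psX] := pd_psd pX; have [h1 h2] := dir1 pX sY pS v.
    by split => //; exact: psX.
  have c1 : continuous (fun p : 'M[R]_L * 'M[R]_L => p.1) := @fst_cont R L.
  have c2 : continuous (fun p : 'M[R]_L * 'M[R]_L => p.2) := @snd_cont R L.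
  have cD : continuous (fun p : 'M[R]_L * 'M[R]_L => p.2 + p.1).
    by move=> p; apply: continuousD; [exact: c2 | exact: c1].
  have cB : continuous (fun p : 'M[R]_L * 'M[R]_L => p.1 - p.2).
    by move=> p; apply: continuousB; [exact: c1 | exact: c2].
  have csym (g : 'M[R]_L * 'M[R]_L -> 'M[R]_L) : continuous g ->
      (forall p, S p -> symmx (g p)) -> forall p, closure S p -> symmx (g p).
    move=> gc Sg p cp; apply/matrixP => i j; rewrite mxE; apply/eqP; rewrite -subr_eq0; apply/eqP.
    apply: (@clos_pre _ _ S (fun p => g p j i - g p i j) [set x : R | x = 0]) => //.
    + by move=> q; apply: continuousB; apply: entry_cont.
    + move=> q /Sg sq; rewrite /= -{1}sq mxE subrr //.
  have cqf (g : 'M[R]_L * 'M[R]_L -> 'M[R]_L) : continuous g ->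
      (forall p v, S p -> 0 <= qf (g p) v v) -> forall p v, closure S p -> 0 <= qf (g p) v v.
    move=> gc Sg p v cp.
    apply: (@clos_pre _ _ S (fun p => qf (g p) v v) [set x | 0 <= x]) => //.
    + exact: qf_cont.
    + by move=> q Sq; exact: Sg.
  move=> p cp.
  have s1 : symmx p.1 := csym _ c1 (fun q Sq => (proj1 (SX q Sq)).1) p cp.
  have s2 : symmx p.2 := csym _ c2 (fun q Sq => (proj1 (proj2 (SX q Sq)))) p cp.
  have q1 := cqf _ c1 (fun q v Sq => (proj2 (proj2 (SX q Sq)) v).1) p.
  have q2 := cqf _ cD (fun q v Sq => (proj2 (proj2 (SX q Sq)) v).2.1) p.
  have q3 := cqf _ cB (fun q v Sq => (proj2 (proj2 (SX q Sq)) v).2.2) p.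
  split; first by split => // v; exact: q1.
  split => //; split; split.
  + by rewrite /symmx linearB /= linearN /= s1 s2.
  + by move=> v; rewrite opprK; exact: q2.
  + by rewrite /symmx linearB /= s1 s2.
  + by move=> v; exact: q3.
Qed.
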